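(* Let $\mathcal{G}$ be a finite graph with a join decomposition $\mathcal{G}=\mathcal{G}_1+\cdots+\mathcal{G}_k$. Then $$\mathfrak{K}_{\mathcal{G}}(x)=\prod_{j=1}^k\mathfrak{K}_{\mathcal{G}_j}(x|_{\mathcal{G}_j}),$$ and $$R(\mathcal{G})=R(\mathcal{G}_1)\times\cdots\times R(\mathcal{G}_k),$$ where for a graph $\mathcal{H}$ with vertex set $\mathcal{U}$, $R(\mathcal{H})=\{x\in[0,1]^{\mathcal{U}}:\mathfrak{K}_{\mathcal{H}'}(x|_{\mathcal{H}'})>0\text{ for every induced subgraph }\mathcal{H}'\subseteq\mathcal{H}\}$.
   Context: Graphs are finite, simple, undirected. A clique is a set of pairwise adjacent vertices (the empty set is a clique). An induced subgraph $\mathcal{H}'$ has vertex set $\mathcal{U}'\subseteq\mathcal{U}$ and all edges between vertices of $\mathcal{U}'$; $x|_{\mathcal{H}'}=(x_v)_{v\in\mathcal{U}'}$. $\mathfrak{K}_{\mathcal{H}}(x)=\sum_{\mathcal{K}\text{ clique}}(-1)^{|\mathcal{K}|}\prod_{v\in\mathcal{K}}x_v$, the empty clique contributing $1$. The graph join $\mathcal{G}_1+\cdots+\mathcal{G}_k$ has vertex set $\mathcal{V}_1\sqcup\cdots\sqcup\mathcal{V}_k$, two vertices being adjacent iff they are adjacent within the same $\mathcal{G}_i$ or lie in different $\mathcal{G}_i$'s. The identification $[0,1]^{\mathcal{V}}=\prod_j[0,1]^{\mathcal{V}_j}$ is used. *)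

(* Defs.v *)
From HB Require Import structures.
From mathcomp Require Import all_boot all_order all_algebra.
Set Implicit Arguments. Unset Strict Implicit. Unset Printing Implicit Defensive.
Import Order.TTheory GRing.Theory Num.Theory.
Local Open Scope ring_scope.

(* A finite simple graph: vertex type T : finType, symmetric irreflexive e : rel T. *)

Definition is_clique (T : finType) (e : rel T) (K : {set T}) : bool :=
  [forall u in K, forall v in K, (u != v) ==> e u v].

Definition Kpoly (R : comNzRingType) (T : finType) (e : rel T) (x : T -> R) : R :=
  \sum_(K : {set T} | is_clique e K) (-1) ^+ #|K| * \prod_(v in K) x v.

Definition subV (T : finType) (U : {set T}) : finType := {v : T | v \in U}.

Definition induced {T : finType} (e : rel T) (U : {set T}) : rel (subV U) :=
  fun a b => e (val a) (val b).
Arguments induced {T} e U.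

Definition restr {R : Type} {T : finType} (U : {set T}) (x : T -> R) : subV U -> R :=
  fun a => x (val a).
Arguments restr {R T} U x.

Definition inRegion (R : realFieldType) (T : finType) (e : rel T) (x : T -> R) : Prop :=
  (forall v, 0 <= x v <= 1) /\
  (forall U : {set T}, 0 < Kpoly (induced e U) (restr U x)).

Definition block (T : finType) (k : nat) (p : T -> 'I_k) (j : 'I_k) : {set T} :=
  [set v | p v == j].

(* Main.v *)
Require Import Defs.
From mathcomp Require Import all_boot all_order all_algebra.
Import Order.TTheory GRing.Theory Num.Theory.
Local Open Scope ring_scope.

Definition Pk {R : comNzRingType} {T : finType} (e : rel T) (x : T -> R) (W : {set T}) : R :=
  \sum_(K : {set T} | (K \subset W) && is_clique e K) \prod_(v in K) (- x v).

Lemma clique_imset (S T : finType) (e : rel T) (f : S -> T) (finj : injective f) (A : {set S}) :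
  is_clique e (f @: A) = is_clique (fun a b => e (f a) (f b)) A.
Proof.
apply/idP/idP => H.
- apply/forall_inP => u uA; apply/forall_inP => v vA; apply/implyP => uv.
  have := forall_inP (forall_inP H (f u) (imset_f f uA)) (f v) (imset_f f vA).
  by rewrite (inj_eq finj) uv.
- apply/forall_inP => u /imsetP [a aA ->]; apply/forall_inP => v /imsetP [b bA ->].
  apply/implyP => ab.
  have := forall_inP (forall_inP H a aA) b bA.
  by rewrite -(inj_eq finj) ab.
Qed.

Lemma Kpoly_inj (R : comNzRingType) (S T : finType) (e : rel T) (x : T -> R) (f : S -> T)
  (finj : injective f) :
  Kpoly (fun a b => e (f a) (f b)) (fun a => x (f a)) = Pk e x (f @: setT).
Proof.
rewrite /Kpoly /Pk.
rewrite (reindex (fun A : {set S} => f @: A)); last first.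
  exists (fun K : {set T} => f @^-1: K).
  - move=> A _; apply/setP => a; rewrite inE; exact: mem_imset.
  - move=> K; rewrite inE => /andP [KS _]; apply/setP => v.
    apply/imsetP/idP => [[a]|vK]; first by rewrite inE => H ->.
    have := subsetP KS v vK => /imsetP [a _ va].
    by exists a => //; rewrite inE -va.
apply: eq_big => [A|A _].
  by rewrite imsetS ?subsetT // clique_imset.
rewrite big_imset /=; last by move=> a b _ _; apply: finj.
under [in RHS]eq_bigr do rewrite -mulN1r.
by rewrite big_split /= prodr_const.
Qed.

Arguments Kpoly_inj {R S T} e x f finj.

Lemma val_imsetT (T : finType) (U : {set T}) : val @: [set: subV U] = U.
Proof.
apply/setP => v; apply/imsetP/idP => [[a _ ->]|vU]; first exact: valP.
by exists (exist _ v vU).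
Qed.

Lemma id_imsetT (T : finType) : (fun v : T => v) @: [set: T] = [set: T].
Proof. by apply/setP => v; rewrite inE; apply/imsetP; exists v. Qed.

Lemma Pk_factor (R : comNzRingType) (T : finType) (e : rel T)
  (k : nat) (p : T -> 'I_k)
  (join : forall u v : T, p u != p v -> e u v) (x : T -> R) (W : {set T}) :
  Pk e x W = \prod_(j < k) Pk e x (W :&: block p j).
Proof.
rewrite /Pk.
pose Q := fun j : 'I_k => [pred K : {set T} | (K \subset W :&: block p j) && is_clique e K].
rewrite (bigA_distr_big_dep Q (fun j K => \prod_(v in K) (- x v))).
rewrite (reindex (fun K : {set T} => [ffun j => K :&: block p j])); last first.
  exists (fun f : {ffun 'I_k -> {set T}} => \bigcup_(j < k) f j).
  - move=> K _; apply/setP => v; apply/bigcupP/idP => [[j _]|vK].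
      by rewrite ffunE inE => /andP [].
    by exists (p v) => //; rewrite ffunE !inE vK eqxx.
  - move=> f; rewrite inE => /familyP fQ; apply/ffunP => j; rewrite ffunE.
    apply/setP => v; rewrite inE; apply/andP/idP => [[/bigcupP [i _ vi] pv]|vj].
      have := fQ i; rewrite inE => /andP [/subsetP/(_ v vi)] + _.
      by rewrite !inE => /andP [_ /eqP pvi]; move: pv; rewrite inE pvi => /eqP <-.
    split; first by apply/bigcupP; exists j.
    have := fQ j; rewrite inE => /andP [/subsetP/(_ v vj)] + _.
    by rewrite !inE => /andP [].
apply: eq_big => [K|K _].
  apply/andP/familyP => [[KW Kc] j|H].
    rewrite ffunE inE; apply/andP; split; first by apply: setSI.
    apply/forall_inP => u; rewrite inE => /andP [uK _].
    apply/forall_inP => v; rewrite inE => /andP [vK _].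
    exact: (forall_inP (forall_inP Kc u uK) v vK).
  split.
    apply/subsetP => v vK; have := H (p v); rewrite ffunE inE => /andP [/subsetP S _].
    by have := S v; rewrite !inE vK eqxx => /(_ isT) /andP [].
  apply/forall_inP => u uK; apply/forall_inP => v vK; apply/implyP => uv.
  case: (eqVneq (p u) (p v)) => puv; last exact: join.
  have := H (p u); rewrite ffunE inE => /andP [_ C].
  have := forall_inP (forall_inP C u _) v.
  by rewrite !inE uK vK puv !eqxx uv => /(_ isT isT).
rewrite (partition_big p predT) //=; apply: eq_bigr => j _; rewrite ffunE.
by apply: eq_bigl => v; rewrite !inE.
Qed.

Arguments Pk_factor {R T e k p} join x W.

Theorem lemma4p7 (R : realFieldType) (T : finType) (e : rel T)
  (e_sym : symmetric e) (e_irr : irreflexive e)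
  (k : nat) (p : T -> 'I_k)
  (join : forall u v : T, p u != p v -> e u v) :
  (forall x : T -> R,
      Kpoly e x = \prod_(j < k) Kpoly (induced e (block p j)) (restr (block p j) x))
  /\
  (forall x : T -> R,
      inRegion e x <->
      (forall j : 'I_k, inRegion (induced e (block p j)) (restr (block p j) x))).
Proof.
have KI : forall (x : T -> R) (U : {set T}),
    Kpoly (induced e U) (restr U x) = Pk e x U.
  move=> x U; have := Kpoly_inj e x (val : subV U -> T) val_inj.
  by rewrite val_imsetT.
have KII : forall (x : T -> R) (j : 'I_k) (U : {set subV (block p j)}),
    Kpoly (induced (induced e (block p j)) U) (restr U (restr (block p j) x)) =
    Pk e x ((fun a : subV U => val (val a)) @: setT).
  move=> x j U; apply: (Kpoly_inj e x (fun a : subV U => val (val a))).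
  by move=> a b /val_inj/val_inj.
split.
  move=> x; have := Kpoly_inj e x (fun v : T => v) (fun a b (h : a = b) => h).
  move=> /= ->; rewrite id_imsetT (Pk_factor join).
  by apply: eq_bigr => j _; rewrite KI setTI.
move=> x; split.
  move=> [B P] j; split; first by move=> a; exact: B.
  move=> U; rewrite KII.
  have := P ((fun a : subV U => val (val a)) @: setT).
  by rewrite KI.
move=> H; split.
  move=> v; have [B _] := H (p v).
  have pv : v \in block p (p v) by rewrite inE.
  exact: (B (exist _ v pv)).
move=> U; rewrite KI (Pk_factor join); apply: prodr_gt0 => j _.
have [_ P] := H j.
have := P [set a : subV (block p j) | val a \in U]; rewrite KII.
suff -> : (fun a : subV [set a : subV (block p j) | val a \in U] => val (val a)) @: setT
          = U :&: block p j by [].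
apply/setP => v; apply/imsetP/idP => [[a _ ->]|].
  have := valP a; rewrite inE => aU; rewrite inE aU /=; exact: valP.
rewrite inE => /andP [vU vB].
have bU : (exist _ v vB : subV (block p j)) \in [set a : subV (block p j) | val a \in U].
  by rewrite inE.
by exists (exist _ (exist _ v vB) bU).
Qed.
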